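(* Let $p,q\in\mathbb{Z}$ be such that the polynomial $x^3-px-q$ is irreducible over $\mathbb{Q}$ and has exactly one real root $\theta$. Then there exists a Peck sequence for the pair $(\theta,\theta^2)$.
   Context: For $x\in\mathbb{R}$, $\|x\|$ denotes the distance from $x$ to the nearest integer. A Peck sequence for a pair $(\sigma,\tau)$ of real numbers is a strictly increasing sequence $(s_n)_{n\ge1}$ of positive integers for which there exist constants $M_1,M_2>0$ and an infinite subsequence $(\psi_n)_{n\ge1}$ of $(s_n)$ with all $\psi_n\ge 2$, such that for all $n$: $\max\{\|s_n\sigma\|,\|s_n\tau\|\}<\frac{M_1}{s_n^{1/2}}$ and $\|\psi_n\sigma\|<\frac{M_2}{\psi_n^{1/2}\log\psi_n}$. *)

(* Defs.v *)
From HB Require Import structures.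
From mathcomp Require Import all_boot all_order all_algebra.
From Stdlib Require Import Reals ZArith.

Set Implicit Arguments. Unset Strict Implicit. Unset Printing Implicit Defensive.

Import GRing.Theory.

Section RingPart.
Local Open Scope ring_scope.
Definition Z_to_rat (z : Z) : rat :=
  if Z.leb 0 z then (Z.to_nat z)%:R else - (Z.to_nat (- z)%Z)%:R.

Definition cubic_pq (p q : Z) : {poly rat} :=
  'X^3 - (Z_to_rat p)%:P * 'X - (Z_to_rat q)%:P.

Definition cubic_irreducible_Q (p q : Z) : Prop :=
  irreducible_poly (cubic_pq p q).
End RingPart.

Local Open Scope R_scope.

Definition dist_int (x : R) : R :=
  Rmin (x - IZR (Int_part x)) (IZR (Int_part x) + 1 - x).

Definition peck_sequence (sigma tau : R) (s : nat -> nat) : Prop :=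
  (forall n, (0 < s n)%nat) /\
  (forall n, (s n < s (S n))%nat) /\
  exists M1 M2 : R, 0 < M1 /\ 0 < M2 /\
  (forall n, Rmax (dist_int (INR (s n) * sigma)) (dist_int (INR (s n) * tau))
             < M1 / sqrt (INR (s n))) /\
  exists phi : nat -> nat,
    (forall n, (phi n < phi (S n))%nat) /\
    (forall n, (2 <= s (phi n))%nat /\
               dist_int (INR (s (phi n)) * sigma)
                 < M2 / (sqrt (INR (s (phi n))) * ln (INR (s (phi n))))).

(* Main.v *)
Require Import Defs.
From Stdlib Require Import Reals ZArith Lia Lra Znumtheory List Classical ClassicalEpsilon.
From mathcomp Require ssrbool ssrnat.

Module MCpart.
From HB Require Import structures.
From mathcomp Require Import all_boot all_order all_algebra.
From mathcomp Require Import Rstruct.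
From Stdlib Require Import Reals ZArith Lia.
Require Import Defs.
From mathcomp Require Import ring.
Import GRing.Theory Num.Theory.

Lemma ratr_Z (z : Z) : (ratr (Z_to_rat z) : R) = IZR z.
Proof.
rewrite /Z_to_rat; case: (Z.leb_spec 0 z) => Hz.
- rewrite rmorph_nat -INRE INR_IZR_INZ Z2Nat.id //.
- rewrite rmorphN rmorph_nat -INRE INR_IZR_INZ Z2Nat.id; last lia.
  rewrite opp_IZR; exact: Ropp_involutive.
Qed.

Lemma size_cubic p q : size (cubic_pq p q) = 4%N.
Proof.
rewrite /cubic_pq -addrA size_addl ?size_polyXn //.
rewrite -opprD size_opp; apply: (leq_ltn_trans (size_add _ _)).
rewrite gtn_max mul_polyC (leq_ltn_trans (size_scale_leq _ _)) ?size_polyX //.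
by rewrite (leq_ltn_trans (size_polyC_leq1 _)).
Qed.

Local Open Scope R_scope.
Lemma no_rat_root p q (Hirr: cubic_irreducible_Q p q) (m n : Z) : n <> 0%Z ->
  (IZR m / IZR n)^3 - IZR p * (IZR m/IZR n) - IZR q <> 0.
Proof.
move=> Hn H.
set r : rat := GRing.mul (Z_to_rat m) (GRing.inv (Z_to_rat n)).
have Hr : root (cubic_pq p q) r.
  apply/eqP; apply: (@fmorph_inj _ R (ratr)).
  rewrite /cubic_pq !hornerE rmorph0.
  rewrite !rmorphB !rmorphM /= !ratr_Z fmorphV /= ratr_Z.
  move: H; rewrite RpowE !RminusE !RmultE !RdivE => H.
  apply: (etrans _ (etrans H R0E)). ring.
move: Hr; rewrite root_factor_theorem => Hd.
have := (Hirr.2 _ _ Hd); rewrite size_XsubC => /(_ isT) /eqp_size.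
by rewrite size_XsubC size_cubic.
Qed.

End MCpart.

Open Scope R_scope.

Lemma Int_part_spec x : IZR (Int_part x) <= x < IZR (Int_part x) + 1.
Proof. destruct (base_Int_part x); lra. Qed.

Lemma Int_part_unique x (k : Z) : IZR k <= x < IZR k + 1 -> Int_part x = k.
Proof.
  intros [H1 H2]. destruct (Int_part_spec x) as [H3 H4].
  assert (A : (Int_part x < k + 1)%Z) by (apply lt_IZR; rewrite plus_IZR; simpl; lra).
  assert (B : (k < Int_part x + 1)%Z) by (apply lt_IZR; rewrite plus_IZR; simpl; lra).
  lia.
Qed.

Lemma dist_int_le x (k : Z) : dist_int x <= Rabs (x - IZR k).
Proof.
  unfold dist_int. destruct (Int_part_spec x) as [H1 H2].
  destruct (Z_le_gt_dec k (Int_part x)) as [Hk|Hk].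
  - apply IZR_le in Hk. eapply Rle_trans; [apply Rmin_l|]. rewrite Rabs_right; lra.
  - assert (Hk' : (Int_part x + 1 <= k)%Z) by lia. apply IZR_le in Hk'. rewrite plus_IZR in Hk'.
    simpl in Hk'. eapply Rle_trans; [apply Rmin_r|]. rewrite Rabs_left1; lra.
Qed.

Lemma dist_int_pos x : (forall k : Z, x <> IZR k) -> 0 < dist_int x.
Proof.
  intros H. unfold dist_int. destruct (Int_part_spec x) as [H1 H2].
  assert (x <> IZR (Int_part x)) by apply H. apply Rmin_glb_lt; lra.
Qed.

Lemma Rabs_sin_le y : Rabs (sin y) <= Rabs y.
Proof.
  assert (G : forall x, 0 <= x -> Rabs (sin x) <= x).
  { intros x Hx. destruct (Req_dec x 0) as [->|Hx0]. rewrite sin_0, Rabs_R0; lra.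
    pose proof (sin_lt_x x ltac:(lra)). pose proof (SIN_bound x).
    destruct (Rle_dec x 1).
    - assert (0 <= sin x). { apply sin_ge_0; pose proof PI2_1; lra. }
      rewrite Rabs_right; lra.
    - apply Rabs_le; lra. }
  destruct (Rle_dec 0 y). rewrite (Rabs_right y) by lra. now apply G.
  rewrite (Rabs_left y) by lra. assert (E : sin y = - sin (- y)) by (rewrite sin_neg; ring).
  rewrite E, Rabs_Ropp. apply G; lra.
Qed.

Lemma NoDup_map_seq {A} (f : nat -> A) n s :
  (forall i j, (s <= i)%nat -> (i < j)%nat -> (j < s + n)%nat -> f i <> f j) ->
  NoDup (map f (seq s n)).
Proof.
  revert s; induction n as [|n IH]; intros s H; simpl. constructor.
  constructor.
  - intros Hin. apply in_map_iff in Hin. destruct Hin as [j [Hj Hin]].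
    apply in_seq in Hin. apply (H s j); try lia. congruence.
  - apply IH. intros i j Hi Hij Hj. apply H; lia.
Qed.

Lemma php_list {A} (L : list A) (f : nat -> A) :
  (forall k, (k <= length L)%nat -> In (f k) L) ->
  exists i j, (i < j <= length L)%nat /\ f i = f j.
Proof.
  intros H. apply NNPP. intros Hn.
  assert (ND : NoDup (map f (seq 0 (S (length L))))).
  { apply NoDup_map_seq. intros i j _ Hij Hj E. apply Hn. exists i, j. split; [lia|exact E]. }
  assert (I : incl (map f (seq 0 (S (length L)))) L).
  { intros a Ha. apply in_map_iff in Ha. destruct Ha as [k [<- Hk]]. apply in_seq in Hk. apply H. lia. }
  pose proof (NoDup_incl_length ND I) as Hl. rewrite length_map, length_seq in Hl. lia.
Qed.

Lemma php_nat (f : nat -> nat) (B : nat) :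
  (forall k, (k <= B)%nat -> (f k < B)%nat) ->
  exists i j, (i < j <= B)%nat /\ f i = f j.
Proof.
  intros H. destruct (php_list (seq 0 B) f) as [i [j [Hij E]]].
  - intros k Hk. rewrite length_seq in Hk. apply in_seq. specialize (H k Hk). lia.
  - rewrite length_seq in Hij. exists i, j. auto.
Qed.

Lemma Int_part_eq_close x y : Int_part x = Int_part y -> Rabs (x - y) < 1.
Proof.
  intros E. destruct (Int_part_spec x), (Int_part_spec y). rewrite E in *.
  apply Rabs_def1; lra.
Qed.

Lemma dirichlet (a : R) (Q : nat) : (1 <= Q)%nat ->
  exists q : nat, (1 <= q <= Q)%nat /\ exists p : Z, Rabs (INR q * a - IZR p) < / INR Q.
Proof.
  intros HQ.
  set (fr := fun k : nat => INR k * a - IZR (Int_part (INR k * a))).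
  assert (Hfr : forall k, 0 <= fr k < 1).
  { intros k. unfold fr. destruct (Int_part_spec (INR k * a)). lra. }
  assert (HQ' : 1 <= INR Q) by (apply (le_INR 1); lia).
  set (f := fun k => Z.to_nat (Int_part (INR Q * fr k))).
  destruct (php_nat f Q) as [i [j [Hij E]]].
  - intros k _. unfold f. destruct (Hfr k).
    destruct (Int_part_spec (INR Q * fr k)) as [A B].
    assert (0 <= INR Q * fr k) by (apply Rmult_le_pos; lra).
    assert (INR Q * fr k < INR Q * 1) by (apply Rmult_lt_compat_l; lra).
    assert (-1 < Int_part (INR Q * fr k))%Z by (apply lt_IZR; simpl; lra).
    assert (Int_part (INR Q * fr k) < Z.of_nat Q)%Z by (apply lt_IZR; rewrite <- INR_IZR_INZ; lra).
    lia.
  - exists (j - i)%nat. split; [lia|].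
    exists (Int_part (INR j * a) - Int_part (INR i * a))%Z.
    unfold f in E.
    assert (E' : Int_part (INR Q * fr j) = Int_part (INR Q * fr i)).
    { destruct (Hfr i), (Hfr j).
      assert (0 <= INR Q * fr i) by (apply Rmult_le_pos; lra).
      assert (0 <= INR Q * fr j) by (apply Rmult_le_pos; lra).
      assert (-1 < Int_part (INR Q * fr i))%Z by (apply lt_IZR; destruct (Int_part_spec (INR Q * fr i)); simpl; lra).
      assert (-1 < Int_part (INR Q * fr j))%Z by (apply lt_IZR; destruct (Int_part_spec (INR Q * fr j)); simpl; lra).
      lia. }
    apply Int_part_eq_close in E'.
    rewrite minus_INR by lia. rewrite minus_IZR.
    replace ((INR j - INR i) * a - (IZR (Int_part (INR j * a)) - IZR (Int_part (INR i * a))))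
      with (fr j - fr i) by (unfold fr; ring).
    replace (INR Q * fr j - INR Q * fr i) with (INR Q * (fr j - fr i)) in E' by ring.
    rewrite Rabs_mult, (Rabs_right (INR Q)) in E' by lra.
    apply (Rmult_lt_reg_l (INR Q)); [lra|]. rewrite Rinv_r by lra. exact E'.
Qed.

Lemma delta_bound (a : R) :
  (forall k, (1 <= k)%nat -> forall m : Z, INR k * a <> IZR m) ->
  forall N, exists d, 0 < d /\ forall k, (1 <= k <= N)%nat -> forall m, d <= Rabs (INR k * a - IZR m).
Proof.
  intros Ha N. induction N as [|N [d [Hd H]]].
  - exists 1. split; [lra|]. intros; lia.
  - assert (Hp : 0 < dist_int (INR (S N) * a)).
    { apply dist_int_pos. intros k. apply Ha. lia. }
    exists (Rmin d (dist_int (INR (S N) * a))). split. apply Rmin_glb_lt; lra.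
    intros k Hk m. destruct (Nat.eq_dec k (S N)) as [->|Hne].
    + eapply Rle_trans. apply Rmin_r. apply dist_int_le.
    + eapply Rle_trans. apply Rmin_l. apply H. lia.
Qed.

Lemma min_nat (P : nat -> Prop) n : P n -> exists m, P m /\ forall k, (k < m)%nat -> ~ P k.
Proof.
  revert P. induction n as [n IH] using (well_founded_induction lt_wf). intros P Hn.
  destruct (classic (exists k, (k < n)%nat /\ P k)) as [[k [Hk Pk]]|Hno].
  - exact (IH k Hk P Pk).
  - exists n. split; auto. intros k Hk Pk. apply Hno. eauto.
Qed.

Lemma INR_Zto_nat (z : Z) : (0 <= z)%Z -> INR (Z.to_nat z) = IZR z.
Proof. intros H. rewrite INR_IZR_INZ, Z2Nat.id; auto. Qed.

Lemma inhom (a b : R) :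
  (forall k, (1 <= k)%nat -> forall m : Z, INR k * a <> IZR m) ->
  forall N : nat, exists n : nat, (N < n)%nat /\
    exists m : Z, Rabs (INR n * a - b - IZR m) <= 3 / INR n.
Proof.
  intros Ha N.
  destruct (delta_bound a Ha N) as [d [Hd Hdk]].
  set (Q := S (Z.to_nat (up (/ d)))).
  assert (HQd : / INR Q < d).
  { destruct (archimed (/ d)) as [A _].
    assert (0 < / d) by (apply Rinv_0_lt_compat; lra).
    assert (0 <= up (/ d))%Z by (apply le_IZR; simpl; lra).
    assert (INR Q = IZR (up (/d)) + 1) by (unfold Q; rewrite S_INR, INR_Zto_nat; auto).
    rewrite <- (Rinv_inv d). apply Rinv_lt_contravar. apply Rmult_lt_0_compat; lra. lra. }
  assert (HQ1 : (1 <= Q)%nat) by (unfold Q; lia).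
  assert (HQpos : 0 < INR Q) by (apply lt_0_INR; lia).
  set (P := fun q => (1 <= q <= Q)%nat /\ exists p : Z, Rabs (INR q * a - IZR p) < / INR Q).
  destruct (dirichlet a Q HQ1) as [q0 Hq0].
  destruct (min_nat P q0 Hq0) as [q [[Hq1 [p Hp]] Hmin]].
  assert (HqN : (N < q)%nat).
  { destruct (Nat.lt_ge_cases N q) as [|Hle]; auto.
    exfalso. specialize (Hdk q ltac:(lia) p). lra. }
  set (qZ := Z.of_nat q).
  assert (HqZ : (0 < qZ)%Z) by (unfold qZ; lia).
  assert (Hg : Z.gcd p qZ = 1%Z).
  { pose proof (Z.gcd_nonneg p qZ) as Hg0.
    destruct (Z.gcd_divide_r p qZ) as [c Hc]. destruct (Z.gcd_divide_l p qZ) as [e He].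
    set (g := Z.gcd p qZ) in *.
    assert (g <> 0)%Z by (intro E; rewrite E in Hc; lia).
    destruct (Z.eq_dec g 1) as [|Hne]; auto. exfalso.
    assert (g >= 2)%Z by lia.
    assert (Hc1 : (1 <= c)%Z) by nia.
    assert (Hcq : (c < qZ)%Z) by nia.
    apply (Hmin (Z.to_nat c)). lia.
    split. lia. exists e.
    assert (E : INR q * a - IZR p = IZR g * (INR (Z.to_nat c) * a - IZR e)).
    { rewrite INR_Zto_nat by lia. rewrite INR_IZR_INZ. fold qZ. rewrite Hc, He, !mult_IZR. ring. }
    rewrite E, Rabs_mult in Hp.
    assert (1 < IZR g) by (apply IZR_lt; lia).
    rewrite Rabs_right in Hp by lra.
    pose proof (Rabs_pos (INR (Z.to_nat c) * a - IZR e)). nra. }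
  assert (Hb : Bezout p qZ 1).
  { apply Zis_gcd_bezout. rewrite <- Hg. apply Zgcd_is_gcd. }
  destruct Hb as [u v Huv].
  set (b1 := b - INR (S N) * a).
  set (j := Int_part (INR q * b1 + / 2)).
  assert (Hj : Rabs (IZR j - INR q * b1) <= / 2).
  { destruct (Int_part_spec (INR q * b1 + / 2)). fold j in H, H0. apply Rabs_le; lra. }
  set (D := (j * u / qZ)%Z).
  set (r := ((j * u) mod qZ)%Z).
  assert (Hr : r = (j * u - qZ * D)%Z) by (unfold r, D; apply Z.mod_eq; lia).
  assert (Hrb : (0 <= r < qZ)%Z) by (unfold r; apply Z.mod_pos_bound; lia).
  set (M := (- (j * v) - D * p)%Z).
  assert (HM : (r * p = j + qZ * M)%Z).
  { rewrite Hr. unfold M.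
    replace ((j * u - qZ * D) * p)%Z with (j * (u * p + v * qZ) - j * v * qZ - qZ * D * p)%Z by ring.
    rewrite Huv. ring. }
  exists (Z.to_nat r + S N)%nat. split. lia. exists M.
  set (n' := Z.to_nat r).
  assert (Hn' : INR n' = IZR r) by (apply INR_Zto_nat; lia).
  assert (HqR : INR q = IZR qZ) by (unfold qZ; apply INR_IZR_INZ).
  assert (HqposR : 0 < INR q) by (apply lt_0_INR; lia).
  assert (HMR : IZR r * IZR p = IZR j + IZR qZ * IZR M) by (rewrite <- !mult_IZR, <- plus_IZR; f_equal; exact HM).
  assert (E : INR (n' + S N) * a - b - IZR M
              = (INR n' * (INR q * a - IZR p) + (IZR j - INR q * b1)) / INR q).
  { rewrite plus_INR. unfold b1. field_simplify_eq; [|lra].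
    rewrite Hn', HqR.
    rewrite HMR. ring. }
  rewrite E.
  assert (Hn'q : INR n' <= INR q) by (rewrite Hn', HqR; apply IZR_le; lia).
  assert (HqQ : INR q <= INR Q) by (apply le_INR; lia).
  assert (H1 : INR n' * Rabs (INR q * a - IZR p) <= 1).
  { assert (0 <= INR n') by apply pos_INR.
    apply Rle_trans with (INR q * / INR Q).
    apply Rmult_le_compat; try lra; apply Rabs_pos.
    apply (Rmult_le_reg_r (INR Q)); [lra|]. rewrite Rmult_assoc, Rinv_l by lra. lra. }
  assert (Hnum : Rabs (INR n' * (INR q * a - IZR p) + (IZR j - INR q * b1)) <= 3 / 2).
  { eapply Rle_trans. apply Rabs_triang. rewrite Rabs_mult, (Rabs_right (INR n')) by (apply Rle_ge, pos_INR). lra. }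
  unfold Rdiv. rewrite Rabs_mult, (Rabs_right (/ INR q)) by (apply Rle_ge, Rlt_le, Rinv_0_lt_compat; lra).
  assert (HnR : INR (n' + S N) < 2 * INR q).
  { replace 2 with (INR 2) by (simpl; ring). rewrite <- mult_INR. apply lt_INR. assert (Z.to_nat r < q)%nat by lia. lia. }
  assert (0 < INR (n' + S N)) by (apply lt_0_INR; lia).
  apply Rle_trans with (3 / 2 * / INR q).
  apply Rmult_le_compat_r. apply Rlt_le, Rinv_0_lt_compat; lra. exact Hnum.
  apply (Rmult_le_reg_r (INR q * INR (n' + S N))). nra.
  field_simplify; try lra.
Qed.

Record T3 := mk { tx : Z; ty : Z; tz : Z }.

Definition tmul (p q : Z) (e f : T3) : T3 :=
  let (x1, y1, z1) := e in let (x2, y2, z2) := f in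
  let c0 := (x1 * x2)%Z in
  let c1 := (x1 * y2 + y1 * x2)%Z in
  let c2 := (x1 * z2 + y1 * y2 + z1 * x2)%Z in
  let c3 := (y1 * z2 + z1 * y2)%Z in
  let c4 := (z1 * z2)%Z in
  mk (c0 + q * c3) (c1 + p * c3 + q * c4) (c2 + p * c4).

Fixpoint tpow (p q : Z) (e : T3) (n : nat) : T3 :=
  match n with O => mk 1 0 0 | S n => tmul p q (tpow p q e n) e end.

Definition Nf (p q : Z) (e : T3) : Z :=
  let (x, y, z) := e in
  (x * ((x + p * z) * (x + p * z) - q * y * z - p * y * y) + q * z * (q * z * z - x * y)
   + q * y * (y * y - x * z - p * z * z))%Z.

Definition adj (p q : Z) (e : T3) : T3 :=
  let (x, y, z) := e in
  mk ((x + p * z) * (x + p * z) - q * y * z - p * y * y) (q * z * z - x * y) (y * y - x * z - p * z * z).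

Definition tr (p : Z) (e : T3) : Z := (3 * tx e + 2 * p * tz e)%Z.

Definition ev0 (th : R) (e : T3) : R := IZR (tx e) + IZR (ty e) * th + IZR (tz e) * th ^ 2.
Definition er (th v : R) (e : T3) : R := IZR (tx e) + IZR (ty e) * (- th / 2) + IZR (tz e) * (th ^ 2 / 4 - v ^ 2).
Definition ei (th v : R) (e : T3) : R := IZR (ty e) * v + IZR (tz e) * (- th * v).

Ltac pushIZR := repeat (rewrite ?plus_IZR, ?mult_IZR, ?minus_IZR, ?opp_IZR).

Lemma tmul_adj p q e : tmul p q e (adj p q e) = mk (Nf p q e) 0 0.
Proof. destruct e as [x y z]; simpl; f_equal; ring. Qed.

Lemma ev0_mul p q th (Hq : IZR q = th ^ 3 - IZR p * th) e f :
  ev0 th (tmul p q e f) = ev0 th e * ev0 th f.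
Proof. destruct e as [x1 y1 z1], f as [x2 y2 z2]; unfold ev0; cbn [tmul tx ty tz]; pushIZR; rewrite Hq; ring. Qed.

Lemma er_mul p q th v (Hq : IZR q = th ^ 3 - IZR p * th) (Hp : IZR p = 3 * th ^ 2 / 4 - v ^ 2) e f :
  er th v (tmul p q e f) = er th v e * er th v f - ei th v e * ei th v f.
Proof. destruct e as [x1 y1 z1], f as [x2 y2 z2]; unfold er, ei; cbn [tmul tx ty tz]; pushIZR; rewrite Hq, Hp; field. Qed.

Lemma ei_mul p q th v (Hq : IZR q = th ^ 3 - IZR p * th) (Hp : IZR p = 3 * th ^ 2 / 4 - v ^ 2) e f :
  ei th v (tmul p q e f) = er th v e * ei th v f + ei th v e * er th v f.
Proof. destruct e as [x1 y1 z1], f as [x2 y2 z2]; unfold er, ei; cbn [tmul tx ty tz]; pushIZR; rewrite Hq, Hp; field. Qed.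

Lemma Nf_eq p q th v (Hq : IZR q = th ^ 3 - IZR p * th) (Hp : IZR p = 3 * th ^ 2 / 4 - v ^ 2) e :
  IZR (Nf p q e) = ev0 th e * (er th v e ^ 2 + ei th v e ^ 2).
Proof. destruct e as [x y z]; unfold Nf, ev0, er, ei; cbn [tmul tx ty tz]; pushIZR; rewrite Hq, Hp; field. Qed.

Lemma tr_eq p th v (Hp : IZR p = 3 * th ^ 2 / 4 - v ^ 2) e :
  IZR (tr p e) = ev0 th e + 2 * er th v e.
Proof. destruct e as [x y z]; unfold tr, ev0, er; cbn [tmul tx ty tz]; pushIZR; rewrite Hp; field. Qed.

Lemma tr1 p q th v (Hq : IZR q = th ^ 3 - IZR p * th) (Hp : IZR p = 3 * th ^ 2 / 4 - v ^ 2) e :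
  IZR (tr p (tmul p q e (mk 0 1 0))) - th * IZR (tr p e)
  = 2 * (er th v e * (- 3 * th / 2) - ei th v e * v).
Proof. destruct e as [x y z]; unfold tr, er, ei; cbn [tmul tx ty tz]; pushIZR; rewrite Hq, Hp; field. Qed.

Lemma tr2 p q th v (Hq : IZR q = th ^ 3 - IZR p * th) (Hp : IZR p = 3 * th ^ 2 / 4 - v ^ 2) e :
  IZR (tr p (tmul p q e (mk 0 0 1))) - th ^ 2 * IZR (tr p e)
  = 2 * (er th v e * (- 3 * th ^ 2 / 4 - v ^ 2) - ei th v e * (- th * v)).
Proof. destruct e as [x y z]; unfold tr, er, ei; cbn [tmul tx ty tz]; pushIZR; rewrite Hq, Hp; field. Qed.

Definition NR (p q : Z) := forall m n : Z, n <> 0%Z ->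
  (IZR m / IZR n) ^ 3 - IZR p * (IZR m / IZR n) - IZR q <> 0.

Lemma F1 p q th : NR p q -> th ^ 3 - IZR p * th - IZR q = 0 ->
  forall m n : Z, n <> 0%Z -> th <> IZR m / IZR n.
Proof. intros H Hr m n Hn E. apply (H m n Hn). rewrite <- E. exact Hr. Qed.

Lemma F2 p q th : NR p q -> th ^ 3 - IZR p * th - IZR q = 0 ->
  forall e, (ty e <> 0 \/ tz e <> 0)%Z -> ev0 th e <> 0.
Proof.
  intros H Hr [x y z] Hyz E. unfold ev0 in E. cbn [tx ty tz] in *.
  destruct (Z.eq_dec z 0) as [Hz|Hz].
  - subst z. assert (Hy : y <> 0%Z) by (destruct Hyz; [auto|lia]).
    assert (Hy' := not_0_IZR _ Hy).
    apply (F1 p q th H Hr (- x) y Hy). rewrite opp_IZR. field_simplify_eq; [simpl in E; lra | exact Hy'].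
  - set (K := (y * y - z * z * p - x * z)%Z).
    assert (Id : IZR K * th - (IZR z * IZR z * IZR q - IZR x * IZR y) =
      IZR y * ev0 th (mk x y z) - IZR z * th * ev0 th (mk x y z)
      + IZR z * IZR z * (th ^ 3 - IZR p * th - IZR q)).
    { unfold K, ev0; cbn [tx ty tz]. pushIZR. ring. }
    unfold ev0 in Id; cbn [tx ty tz] in Id. rewrite E, Hr in Id.
    destruct (Z.eq_dec K 0) as [HK|HK].
    + rewrite HK in Id.
      assert (Hxy : (z * z * q - x * y = 0)%Z).
      { apply eq_IZR. pushIZR. simpl in Id |- *. lra. }
      apply (H y z Hz).
      assert (Hnum : (y * y * y - p * y * (z * z) - q * (z * z * z) = 0)%Z).
      { replace (y * y * y - p * y * (z * z) - q * (z * z * z))%Z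
          with (y * K - z * (z * z * q - x * y))%Z by (unfold K; ring).
        rewrite HK, Hxy. ring. }
      apply (f_equal IZR) in Hnum. revert Hnum. pushIZR. intros Hnum.
      apply not_0_IZR in Hz. field_simplify_eq; auto.
      simpl in Hnum. nra.
    + apply (F1 p q th H Hr (z * z * q - x * y) K HK).
      apply not_0_IZR in HK. field_simplify_eq; auto. pushIZR. simpl in Id. lra.
Qed.

Lemma F3 p q th v : NR p q -> th ^ 3 - IZR p * th - IZR q = 0 -> v <> 0 ->
  forall e, ei th v e = 0 -> ty e = 0%Z /\ tz e = 0%Z.
Proof.
  intros H Hr Hv [x y z] E. unfold ei in E. cbn [tx ty tz] in *.
  assert (E' : IZR y = IZR z * th).
  { apply (Rmult_eq_reg_r v); auto. lra. }
  destruct (Z.eq_dec z 0) as [Hz|Hz].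
  - subst z. simpl in E'. rewrite Rmult_0_l in E'. apply eq_IZR in E'. auto.
  - exfalso. apply (F1 p q th H Hr y z Hz). apply not_0_IZR in Hz.
    rewrite E'. field. auto.
Qed.

Lemma php_frac (g : nat -> R) (B : nat) : (1 <= B)%nat ->
  exists i j, (i < j <= B)%nat /\
    Rabs (g j - g i - IZR (Int_part (g j) - Int_part (g i))) < / INR B.
Proof.
  intros HQ.
  set (fr := fun k : nat => g k - IZR (Int_part (g k))).
  assert (Hfr : forall k, 0 <= fr k < 1).
  { intros k. unfold fr. destruct (Int_part_spec (g k)). lra. }
  assert (HQ' : 1 <= INR B) by (apply (le_INR 1); lia).
  set (f := fun k => Z.to_nat (Int_part (INR B * fr k))).
  assert (Hpos : forall k, (0 <= Int_part (INR B * fr k))%Z).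
  { intros k. destruct (Hfr k).
    assert (0 <= INR B * fr k) by (apply Rmult_le_pos; lra).
    assert (-1 < Int_part (INR B * fr k))%Z by (apply lt_IZR; destruct (Int_part_spec (INR B * fr k)); simpl; lra).
    lia. }
  destruct (php_nat f B) as [i [j [Hij E]]].
  - intros k _. unfold f. destruct (Hfr k).
    destruct (Int_part_spec (INR B * fr k)) as [A C].
    assert (INR B * fr k < INR B * 1) by (apply Rmult_lt_compat_l; lra).
    assert (Int_part (INR B * fr k) < Z.of_nat B)%Z by (apply lt_IZR; rewrite <- INR_IZR_INZ; lra).
    specialize (Hpos k). lia.
  - exists i, j. split; [lia|].
    unfold f in E.
    assert (E' : Int_part (INR B * fr j) = Int_part (INR B * fr i)).
    { pose proof (Hpos i). pose proof (Hpos j). lia. }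
    apply Int_part_eq_close in E'.
    rewrite minus_IZR.
    replace (g j - g i - (IZR (Int_part (g j)) - IZR (Int_part (g i)))) with (fr j - fr i) by (unfold fr; ring).
    replace (INR B * fr j - INR B * fr i) with (INR B * (fr j - fr i)) in E' by ring.
    rewrite Rabs_mult, (Rabs_right (INR B)) in E' by lra.
    apply (Rmult_lt_reg_l (INR B)); [lra|]. rewrite Rinv_r by lra. exact E'.
Qed.

Definition SS th v e := er th v e ^ 2 + ei th v e ^ 2.

Lemma div_le_H (H k : nat) : (k <= H * H)%nat -> (k / S H <= H)%nat.
Proof.
  intros Hk. apply Nat.lt_succ_r. apply Nat.Div0.div_lt_upper_bound. nia.
Qed.

Lemma stepA th v : exists C, 0 < C /\ forall H : nat, (1 <= H)%nat -> exists e,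
  (ty e <> 0 \/ tz e <> 0)%Z /\ Rabs (ev0 th e) < / (INR H * INR H) /\ SS th v e <= C * (INR H * INR H).
Proof.
  set (c1 := 1 + Rabs th + th ^ 2 + Rabs th / 2 + Rabs (th ^ 2 / 4 - v ^ 2)).
  set (c2 := Rabs v + Rabs (- th * v)).
  exists ((c1 + c2) ^ 2 + 1). split. pose proof (pow2_ge_0 (c1 + c2)). lra.
  intros H HH.
  assert (HR : 1 <= INR H) by (apply (le_INR 1); lia).
  destruct (php_frac (fun k => INR (k / S H) * th + INR (k mod S H) * th ^ 2) (H * H)) as [i [j [Hij Hb]]].
  { nia. }
  set (y := (Z.of_nat (j / S H) - Z.of_nat (i / S H))%Z).
  set (z := (Z.of_nat (j mod S H) - Z.of_nat (i mod S H))%Z).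
  set (x := (- (Int_part (INR (j / S H) * th + INR (j mod S H) * th ^ 2)
            - Int_part (INR (i / S H) * th + INR (i mod S H) * th ^ 2)))%Z).
  exists (mk x y z).
  assert (Hev : ev0 th (mk x y z) = INR (j / S H) * th + INR (j mod S H) * th ^ 2
     - (INR (i / S H) * th + INR (i mod S H) * th ^ 2)
     - IZR (Int_part (INR (j / S H) * th + INR (j mod S H) * th ^ 2)
            - Int_part (INR (i / S H) * th + INR (i mod S H) * th ^ 2))).
  { unfold ev0, x, y, z; cbn [tx ty tz]. rewrite !minus_IZR, opp_IZR, minus_IZR, <- !INR_IZR_INZ. ring. }
  assert (Hy : Rabs (IZR y) <= INR H).
  { unfold y. rewrite minus_IZR, <- !INR_IZR_INZ.
    pose proof (div_le_H H j ltac:(lia)). pose proof (div_le_H H i ltac:(lia)).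
    apply le_INR in H0. apply le_INR in H1. pose proof (pos_INR (j / S H)). pose proof (pos_INR (i / S H)).
    apply Rabs_le; lra. }
  assert (Hz : Rabs (IZR z) <= INR H).
  { unfold z. rewrite minus_IZR, <- !INR_IZR_INZ.
    assert (j mod S H <= H)%nat by (pose proof (Nat.mod_upper_bound j (S H)); lia).
    assert (i mod S H <= H)%nat by (pose proof (Nat.mod_upper_bound i (S H)); lia).
    apply le_INR in H0. apply le_INR in H1. pose proof (pos_INR (j mod S H)). pose proof (pos_INR (i mod S H)).
    apply Rabs_le; lra. }
  rewrite <- Hev in Hb.
  assert (HH2 : 1 <= INR H * INR H) by nra.
  assert (Hev1 : Rabs (ev0 th (mk x y z)) <= 1).
  { apply Rlt_le. eapply Rlt_le_trans. exact Hb. rewrite mult_INR.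
    rewrite <- Rinv_1. apply Rinv_le_contravar; lra. }
  split; [|split].
  - destruct (Z.eq_dec y 0) as [Ey|Ey]; [|left; auto].
    destruct (Z.eq_dec z 0) as [Ez|Ez]; [|right; auto].
    exfalso. unfold y, z in *.
    assert (j / S H = i / S H)%nat by lia. assert (j mod S H = i mod S H)%nat by lia.
    rewrite (Nat.div_mod_eq j (S H)), (Nat.div_mod_eq i (S H)) in Hij. lia.
  - rewrite mult_INR in Hb. exact Hb.
  - unfold ev0 in Hev1; cbn [tx ty tz] in Hev1.
    assert (Hx : Rabs (IZR x) <= INR H * (1 + Rabs th + th ^ 2)).
    { replace (IZR x) with ((IZR x + IZR y * th + IZR z * th ^ 2) - IZR y * th - IZR z * th ^ 2) by ring.
      eapply Rle_trans. apply Rabs_triang. eapply Rle_trans. apply Rplus_le_compat_r. apply Rabs_triang.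
      rewrite !Rabs_Ropp, !Rabs_mult, (Rabs_right (th ^ 2)) by (apply Rle_ge, pow2_ge_0).
      pose proof (Rabs_pos th). pose proof (pow2_ge_0 th).
      assert (Rabs (IZR y) * Rabs th <= INR H * Rabs th) by (apply Rmult_le_compat_r; lra).
      assert (Rabs (IZR z) * th ^ 2 <= INR H * th ^ 2) by (apply Rmult_le_compat_r; lra).
      nra. }
    assert (Her : Rabs (er th v (mk x y z)) <= INR H * c1).
    { unfold er; cbn [tx ty tz]. unfold c1.
      assert (A1 : Rabs (IZR y * (- th / 2)) <= INR H * (Rabs th / 2)).
      { rewrite Rabs_mult. apply Rmult_le_compat; try apply Rabs_pos; auto.
        unfold Rdiv. rewrite Rabs_mult, Rabs_Ropp, Rabs_inv, (Rabs_right 2) by lra. lra. }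
      assert (A2 : Rabs (IZR z * (th ^ 2 / 4 - v ^ 2)) <= INR H * Rabs (th ^ 2 / 4 - v ^ 2)).
      { rewrite Rabs_mult. apply Rmult_le_compat_r; [apply Rabs_pos|auto]. }
      eapply Rle_trans. apply Rabs_triang. eapply Rle_trans. apply Rplus_le_compat_r. apply Rabs_triang.
      lra. }
    assert (Hei : Rabs (ei th v (mk x y z)) <= INR H * c2).
    { unfold ei; cbn [tx ty tz]. unfold c2.
      assert (A1 : Rabs (IZR y * v) <= INR H * Rabs v) by (rewrite Rabs_mult; apply Rmult_le_compat_r; [apply Rabs_pos|auto]).
      assert (A2 : Rabs (IZR z * (- th * v)) <= INR H * Rabs (- th * v)) by (rewrite Rabs_mult; apply Rmult_le_compat_r; [apply Rabs_pos|auto]).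
      eapply Rle_trans. apply Rabs_triang. lra. }
    unfold SS.
    assert (0 <= c1) by (unfold c1; pose proof (Rabs_pos th); pose proof (pow2_ge_0 th); pose proof (Rabs_pos (th ^ 2 / 4 - v ^ 2)); lra).
    assert (0 <= c2) by (unfold c2; pose proof (Rabs_pos v); pose proof (Rabs_pos (- th * v)); lra).
    assert (E1 : er th v (mk x y z) ^ 2 = Rabs (er th v (mk x y z)) ^ 2) by (rewrite pow2_abs; reflexivity).
    assert (E2 : ei th v (mk x y z) ^ 2 = Rabs (ei th v (mk x y z)) ^ 2) by (rewrite pow2_abs; reflexivity).
    rewrite E1, E2.
    pose proof (Rabs_pos (er th v (mk x y z))). pose proof (Rabs_pos (ei th v (mk x y z))).
    assert (Rabs (er th v (mk x y z)) ^ 2 <= (INR H * c1) ^ 2) by (apply pow_incr; lra).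
    assert (Rabs (ei th v (mk x y z)) ^ 2 <= (INR H * c2) ^ 2) by (apply pow_incr; lra).
    nra.
Qed.

Definition Good p q Kn e := (ty e <> 0 \/ tz e <> 0)%Z /\ Nf p q e <> 0%Z /\ (Z.abs (Nf p q e) < Z.of_nat Kn)%Z.

Lemma up_pos_nat x : 0 < x -> x < INR (Z.to_nat (up x)).
Proof.
  intros Hx. destruct (archimed x) as [A _].
  assert (0 <= up x)%Z by (apply le_IZR; simpl; lra).
  rewrite INR_IZR_INZ, Z2Nat.id; auto.
Qed.

Lemma stepB p q th v (NRh : NR p q) (Hr : th ^ 3 - IZR p * th - IZR q = 0) (Hv : v <> 0)
  (Hq : IZR q = th ^ 3 - IZR p * th) (Hp : IZR p = 3 * th ^ 2 / 4 - v ^ 2) :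
  exists Kn : nat, forall r, 0 < r -> exists e, Good p q Kn e /\ 0 < Rabs (ev0 th e) < r.
Proof.
  destruct (stepA th v) as [C [HC HA]].
  exists (Z.to_nat (up C)). intros r Hrp.
  set (H := S (Z.to_nat (up (/ r)))).
  assert (HH : / r < INR H).
  { unfold H. rewrite S_INR. pose proof (up_pos_nat (/ r) ltac:(apply Rinv_0_lt_compat; lra)). lra. }
  assert (HR : 1 <= INR H) by (apply (le_INR 1); unfold H; lia).
  destruct (HA H ltac:(unfold H; lia)) as [e [Hyz [Hsmall HS]]].
  exists e.
  assert (Hev : ev0 th e <> 0) by (apply (F2 p q th NRh Hr); auto).
  assert (Hei : ei th v e <> 0).
  { intros E. destruct (F3 p q th v NRh Hr Hv e E). destruct Hyz; auto. }
  assert (HSp : 0 < SS th v e).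
  { unfold SS. pose proof (pow2_ge_0 (er th v e)). assert (0 < ei th v e ^ 2) by (simpl; rewrite Rmult_1_r; apply Rsqr_pos_lt; auto). lra. }
  assert (HN := Nf_eq p q th v Hq Hp e). fold (SS th v e) in HN.
  assert (HHH : 0 < INR H * INR H) by nra.
  split; [split; [auto|split]|].
  - intros E. rewrite E in HN. simpl in HN. symmetry in HN. apply Rmult_integral in HN. destruct HN; [auto|lra].
  - assert (Hb : Rabs (IZR (Nf p q e)) < C).
    { rewrite HN, Rabs_mult, (Rabs_right (SS th v e)) by lra.
      apply Rlt_le_trans with (/ (INR H * INR H) * SS th v e).
      apply Rmult_lt_compat_r; lra.
      apply Rle_trans with (/ (INR H * INR H) * (C * (INR H * INR H))).
      apply Rmult_le_compat_l; [apply Rlt_le, Rinv_0_lt_compat; lra | lra].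
      rewrite Rmult_comm, Rmult_assoc, Rinv_r by lra. lra. }
    rewrite <- abs_IZR in Hb. destruct (archimed C) as [A _].
    assert (Z.abs (Nf p q e) < up C)%Z by (apply lt_IZR; lra).
    assert (0 <= up C)%Z by (apply le_IZR; simpl; lra). lia.
  - split. apply Rabs_pos_lt; auto.
    eapply Rlt_le_trans. exact Hsmall.
    apply Rle_trans with (/ INR H).
    apply Rinv_le_contravar; nra.
    rewrite <- (Rinv_inv r). apply Rlt_le, Rinv_lt_contravar. apply Rmult_lt_0_compat; [apply Rinv_0_lt_compat|]; lra. exact HH.
Qed.

Definition tsc (n : Z) (e : T3) := mk (n * tx e) (n * ty e) (n * tz e).
Definition tadd (e f : T3) := mk (tx e + tx f) (ty e + ty f) (tz e + tz f).

Lemma key_id p q e d : tmul p q (tadd e (tsc (Nf p q e) d)) (adj p q e)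
  = tsc (Nf p q e) (tadd (mk 1 0 0) (tmul p q d (adj p q e))).
Proof. destruct e as [x y z], d as [a b c]; unfold tadd, tsc, Nf, adj, tmul; cbn [tx ty tz]; f_equal; ring. Qed.

Lemma ev0_tsc th n u : ev0 th (tsc n u) = IZR n * ev0 th u.
Proof. unfold ev0, tsc; cbn [tx ty tz]; pushIZR; ring. Qed.
Lemma er_tsc th v n u : er th v (tsc n u) = IZR n * er th v u.
Proof. unfold er, tsc; cbn [tx ty tz]; pushIZR; ring. Qed.
Lemma ei_tsc th v n u : ei th v (tsc n u) = IZR n * ei th v u.
Proof. unfold ei, tsc; cbn [tx ty tz]; pushIZR; ring. Qed.
Lemma ev0_c th n : ev0 th (mk n 0 0) = IZR n.
Proof. unfold ev0; cbn [tx ty tz]; ring. Qed.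
Lemma er_c th v n : er th v (mk n 0 0) = IZR n.
Proof. unfold er; cbn [tx ty tz]; ring. Qed.
Lemma ei_c th v n : ei th v (mk n 0 0) = 0.
Proof. unfold ei; cbn [tx ty tz]; ring. Qed.

Lemma SS_mul p q th v (Hq : IZR q = th ^ 3 - IZR p * th) (Hp : IZR p = 3 * th ^ 2 / 4 - v ^ 2) e f :
  SS th v (tmul p q e f) = SS th v e * SS th v f.
Proof. unfold SS. rewrite (er_mul p q th v Hq Hp), (ei_mul p q th v Hq Hp). ring. Qed.

Definition nextE p q th Kn r :=
  epsilon (inhabits (mk 0 0 0)) (fun e => Good p q Kn e /\ 0 < Rabs (ev0 th e) < r).

Fixpoint seqE p q th Kn k :=
  match k with O => nextE p q th Kn 1 | S k => nextE p q th Kn (Rabs (ev0 th (seqE p q th Kn k))) end.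

Lemma seqE_spec p q th Kn
  (HB : forall r, 0 < r -> exists e, Good p q Kn e /\ 0 < Rabs (ev0 th e) < r) k :
  Good p q Kn (seqE p q th Kn k) /\ 0 < Rabs (ev0 th (seqE p q th Kn k))
  /\ Rabs (ev0 th (seqE p q th Kn (S k))) < Rabs (ev0 th (seqE p q th Kn k)).
Proof.
  assert (NS : forall r, 0 < r -> Good p q Kn (nextE p q th Kn r) /\ 0 < Rabs (ev0 th (nextE p q th Kn r)) < r).
  { intros r Hr. unfold nextE. apply epsilon_spec. apply HB; auto. }
  assert (G : forall k, Good p q Kn (seqE p q th Kn k) /\ 0 < Rabs (ev0 th (seqE p q th Kn k))).
  { induction k0 as [|k0 [IH1 IH2]]; simpl.
    - destruct (NS 1 ltac:(lra)) as [A [B C]]; auto.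
    - destruct (NS _ IH2) as [A [B C]]; auto. }
  destruct (G k) as [A B]. split; auto. split; auto. simpl.
  destruct (NS _ B) as [_ [_ C]]. exact C.
Qed.

Fixpoint zr (lo : Z) (n : nat) : list Z :=
  match n with O => nil | S n => lo :: zr (lo + 1)%Z n end.

Lemma in_zr n : forall lo z, (lo <= z < lo + Z.of_nat n)%Z -> In z (zr lo n).
Proof.
  induction n as [|n IH]; intros lo z Hz; simpl. lia.
  destruct (Z.eq_dec lo z) as [E|E]. left; auto. right. apply IH. lia.
Qed.

Lemma length_zr n : forall lo, length (zr lo n) = n.
Proof. induction n; intros; simpl; auto. Qed.

Definition cls p q (e : T3) : Z * Z * Z * Z :=
  let N := Nf p q e in (N, (tx e mod Z.abs N)%Z, (ty e mod Z.abs N)%Z, (tz e mod Z.abs N)%Z).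

Definition clsL (Kn : nat) :=
  list_prod (list_prod (list_prod (zr (- Z.of_nat Kn) (2 * Kn + 1)) (zr 0 Kn)) (zr 0 Kn)) (zr 0 Kn).

Lemma cls_in p q Kn e : Good p q Kn e -> In (cls p q e) (clsL Kn).
Proof.
  intros [_ [HN HK]]. unfold cls, clsL.
  assert (R : forall a, (0 <= a mod Z.abs (Nf p q e) < 0 + Z.of_nat Kn)%Z).
  { intros a. pose proof (Z.mod_pos_bound a (Z.abs (Nf p q e)) ltac:(lia)). lia. }
  repeat (apply in_prod_iff; split); try apply in_zr; try apply R. lia.
Qed.

Lemma mod_eq_ex a b N : N <> 0%Z -> (a mod Z.abs N = b mod Z.abs N)%Z -> exists d, a = (b + N * d)%Z.
Proof.
  intros HN E. exists (Z.sgn N * (a / Z.abs N - b / Z.abs N))%Z.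
  pose proof (Z.div_mod a (Z.abs N) ltac:(lia)). pose proof (Z.div_mod b (Z.abs N) ltac:(lia)).
  rewrite Z.mul_assoc, Z.sgn_abs. lia.
Qed.

Lemma dec_seq p q th Kn
  (HB : forall r, 0 < r -> exists e, Good p q Kn e /\ 0 < Rabs (ev0 th e) < r) i j :
  (i < j)%nat -> Rabs (ev0 th (seqE p q th Kn j)) < Rabs (ev0 th (seqE p q th Kn i)).
Proof.
  induction 1.
  - apply (seqE_spec p q th Kn HB i).
  - eapply Rlt_trans. apply (seqE_spec p q th Kn HB m). auto.
Qed.

Lemma unit_exists p q th v (NRh : NR p q) (Hr : th ^ 3 - IZR p * th - IZR q = 0) (Hv : v <> 0)
  (Hq : IZR q = th ^ 3 - IZR p * th) (Hp : IZR p = 3 * th ^ 2 / 4 - v ^ 2) :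
  exists eps, 1 < ev0 th eps /\ ev0 th eps * SS th v eps = 1.
Proof.
  destruct (stepB p q th v NRh Hr Hv Hq Hp) as [Kn HB].
  set (sq := seqE p q th Kn).
  destruct (php_list (clsL Kn) (fun k => cls p q (sq k))) as [i [j [Hij E]]].
  { intros k _. apply cls_in. apply (seqE_spec p q th Kn HB k). }
  set (ei_ := sq i). set (ej := sq j).
  destruct (seqE_spec p q th Kn HB i) as [[_ [HNi _]] [Hai _]].
  destruct (seqE_spec p q th Kn HB j) as [[_ [HNj _]] [Haj _]].
  assert (Hdec := dec_seq p q th Kn HB i j ltac:(lia)). fold sq ei_ ej in Hdec, Hai, Haj, HNi, HNj.
  unfold cls in E. fold sq ei_ ej in E. injection E as EN Ex Ey Ez.
  set (N := Nf p q ej) in *.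
  rewrite EN in Ex, Ey, Ez.
  destruct (mod_eq_ex _ _ N HNj Ex) as [dx Hdx].
  destruct (mod_eq_ex _ _ N HNj Ey) as [dy Hdy].
  destruct (mod_eq_ex _ _ N HNj Ez) as [dz Hdz].
  assert (Hei : ei_ = tadd ej (tsc N (mk dx dy dz))).
  { destruct ei_ as [a b c]; unfold tadd, tsc; cbn [tx ty tz] in *; f_equal; auto. }
  set (u := tadd (mk 1 0 0) (tmul p q (mk dx dy dz) (adj p q ej))).
  assert (Hw : tmul p q ei_ (adj p q ej) = tsc N u).
  { rewrite Hei. apply key_id. }
  set (A := ev0 th (adj p q ej)). set (Bs := SS th v (adj p q ej)).
  assert (H1 : IZR N * ev0 th u = ev0 th ei_ * A).
  { rewrite <- ev0_tsc, <- Hw. apply (ev0_mul p q th Hq). }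
  assert (H2 : ev0 th ej * A = IZR N).
  { unfold A. rewrite <- (ev0_mul p q th Hq), tmul_adj. unfold N. apply ev0_c. }
  assert (H3 : IZR N * IZR N * SS th v u = SS th v ei_ * Bs).
  { unfold Bs. rewrite <- (SS_mul p q th v Hq Hp), Hw. unfold SS. rewrite er_tsc, ei_tsc. ring. }
  assert (H4 : SS th v ej * Bs = IZR N * IZR N).
  { unfold Bs. rewrite <- (SS_mul p q th v Hq Hp), tmul_adj. unfold SS. rewrite er_c, ei_c. unfold N; ring. }
  assert (H5 : ev0 th ei_ * SS th v ei_ = IZR N).
  { rewrite <- EN. symmetry. apply (Nf_eq p q th v Hq Hp). }
  assert (H6 : ev0 th ej * SS th v ej = IZR N).
  { unfold N. symmetry. apply (Nf_eq p q th v Hq Hp). }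
  assert (HN0 : IZR N <> 0) by (apply not_0_IZR; auto).
  assert (Hej0 : ev0 th ej <> 0) by (intros Z0; rewrite Z0 in Haj; rewrite Rabs_R0 in Haj; lra).
  assert (HSj : SS th v ej <> 0) by (intros Z0; rewrite Z0 in H6; lra).
  assert (EA : A = IZR N / ev0 th ej) by (field_simplify_eq; auto; lra).
  assert (EB : Bs = IZR N * IZR N / SS th v ej) by (field_simplify_eq; auto; lra).
  assert (Eu : ev0 th u = ev0 th ei_ / ev0 th ej).
  { apply (Rmult_eq_reg_l (IZR N)); auto. rewrite H1, EA. field. auto. }
  assert (Su : SS th v u = SS th v ei_ / SS th v ej).
  { apply (Rmult_eq_reg_l (IZR N * IZR N)). rewrite H3, EB. field. auto. apply Rmult_integral_contrapositive; auto. }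
  assert (Hprod : ev0 th u * SS th v u = 1).
  { rewrite Eu, Su. replace (ev0 th ei_ / ev0 th ej * (SS th v ei_ / SS th v ej))
      with ((ev0 th ei_ * SS th v ei_) / (ev0 th ej * SS th v ej)) by (field; auto).
    rewrite H5, H6. field. auto. }
  assert (Habs : 1 < Rabs (ev0 th u)).
  { unfold Rdiv in Eu. rewrite Eu, Rabs_mult, Rabs_inv. apply (Rmult_lt_reg_r (Rabs (ev0 th ej))). auto.
    rewrite Rmult_assoc, Rinv_l by (apply Rabs_no_R0; auto). lra. }
  destruct (Rle_dec 0 (ev0 th u)) as [Hpos|Hneg].
  - exists u. rewrite Rabs_right in Habs by lra. auto.
  - exists (tmul p q u u). rewrite (ev0_mul p q th Hq), (SS_mul p q th v Hq Hp).
    rewrite Rabs_left in Habs by lra. split; nra.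
Qed.

Lemma polar a b : 0 < a ^ 2 + b ^ 2 ->
  exists phi, a = sqrt (a ^ 2 + b ^ 2) * cos phi /\ b = sqrt (a ^ 2 + b ^ 2) * sin phi.
Proof.
  intros H. set (rho := sqrt (a ^ 2 + b ^ 2)).
  assert (Hr : 0 < rho) by (apply sqrt_lt_R0; auto).
  assert (Hr2 : rho * rho = a ^ 2 + b ^ 2) by (apply sqrt_sqrt; lra).
  set (c := a / rho).
  assert (Hc : -1 <= c <= 1).
  { unfold c. assert (a * a <= rho * rho) by nra.
    split; [apply (Rmult_le_reg_r rho); auto; field_simplify; try lra; nra
           |apply (Rmult_le_reg_r rho); auto; field_simplify; try lra; nra]. }
  assert (Hs : sqrt (1 - c²) = Rabs b / rho).
  { replace (1 - c²) with (Rsqr (b / rho)) by (unfold c, Rsqr; field_simplify_eq; try lra; nra).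
    rewrite sqrt_Rsqr_abs. unfold Rdiv. rewrite Rabs_mult, Rabs_inv, (Rabs_right rho) by lra. reflexivity. }
  destruct (Rle_dec 0 b) as [Hb|Hb].
  - exists (acos c). rewrite cos_acos, sin_acos by auto. rewrite Hs, Rabs_right by lra.
    fold rho. unfold c. split; field; lra.
  - exists (- acos c). rewrite cos_neg, sin_neg, cos_acos, sin_acos by auto. rewrite Hs, Rabs_left by lra.
    fold rho. unfold c. split; field; lra.
Qed.

Lemma tpow_S p q e n : tpow p q e (S n) = tmul p q (tpow p q e n) e.
Proof. reflexivity. Qed.

Lemma ev0_pow p q th (Hq : IZR q = th ^ 3 - IZR p * th) e n :
  ev0 th (tpow p q e n) = ev0 th e ^ n.
Proof.
  induction n; simpl. unfold ev0; cbn [tx ty tz]; ring.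
  rewrite (ev0_mul p q th Hq), IHn. ring.
Qed.

Lemma SS_pow p q th v (Hq : IZR q = th ^ 3 - IZR p * th) (Hp : IZR p = 3 * th ^ 2 / 4 - v ^ 2) e n :
  SS th v (tpow p q e n) = SS th v e ^ n.
Proof.
  induction n; simpl. unfold SS, er, ei; cbn [tx ty tz]; ring.
  rewrite (SS_mul p q th v Hq Hp), IHn. ring.
Qed.

Lemma polar_pow p q th v (Hq : IZR q = th ^ 3 - IZR p * th) (Hp : IZR p = 3 * th ^ 2 / 4 - v ^ 2)
  e r phi : er th v e = r * cos phi -> ei th v e = r * sin phi ->
  forall n, er th v (tpow p q e n) = r ^ n * cos (INR n * phi)
         /\ ei th v (tpow p q e n) = r ^ n * sin (INR n * phi).
Proof.
  intros H1 H2 n. induction n as [|n [IH1 IH2]].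
  - replace (INR 0 * phi) with 0 by (simpl; ring). simpl. unfold er, ei; cbn [tx ty tz]. rewrite cos_0, sin_0. split; ring.
  - rewrite tpow_S, (er_mul p q th v Hq Hp), (ei_mul p q th v Hq Hp), IH1, IH2, H1, H2, S_INR.
    replace ((INR n + 1) * phi) with (INR n * phi + phi) by ring.
    rewrite cos_plus, sin_plus. simpl. split; ring.
Qed.

Lemma phase_irr p q th v (NRh : NR p q) (Hr : th ^ 3 - IZR p * th - IZR q = 0) (Hv : v <> 0)
  (Hq : IZR q = th ^ 3 - IZR p * th) (Hp : IZR p = 3 * th ^ 2 / 4 - v ^ 2)
  e r phi : 1 < ev0 th e -> ev0 th e * SS th v e = 1 ->
  er th v e = r * cos phi -> ei th v e = r * sin phi ->
  forall k, (1 <= k)%nat -> forall m : Z, INR k * (phi / PI) <> IZR m.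
Proof.
  intros Hl Hprod H1 H2 k Hk m E.
  assert (Hk' : INR k * phi = IZR m * PI).
  { rewrite <- E. field. pose proof PI_RGT_0. lra. }
  destruct (polar_pow p q th v Hq Hp e r phi H1 H2 k) as [Er Ei].
  assert (Hs : sin (INR k * phi) = 0) by (apply sin_eq_0_1; eauto).
  rewrite Hs, Rmult_0_r in Ei.
  destruct (F3 p q th v NRh Hr Hv _ Ei) as [Hy Hz].
  set (w := tpow p q e k) in *.
  assert (Ew : ev0 th w = er th v w) by (unfold ev0, er; rewrite Hy, Hz; ring).
  assert (HP : ev0 th w * SS th v w = 1).
  { unfold w. rewrite (ev0_pow p q th Hq), (SS_pow p q th v Hq Hp), <- Rpow_mult_distr, Hprod. apply pow1. }
  unfold SS in HP. rewrite Ei, <- Ew in HP.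
  assert (Hgt : 1 < ev0 th w).
  { unfold w. rewrite (ev0_pow p q th Hq). apply Rlt_pow_R1; auto. }
  nra.
Qed.

Lemma disc_pos p q th (NRh : NR p q) (Hroot : th ^ 3 - IZR p * th - IZR q = 0)
  (Huniq : forall x : R, x ^ 3 - IZR p * x - IZR q = 0 -> x = th) :
  0 < 3 * th ^ 2 / 4 - IZR p.
Proof.
  destruct (Rlt_le_dec 0 (3 * th ^ 2 / 4 - IZR p)) as [H|H]; auto. exfalso.
  set (d := sqrt (4 * IZR p - 3 * th ^ 2)).
  assert (Hd : d * d = 4 * IZR p - 3 * th ^ 2) by (apply sqrt_sqrt; lra).
  assert (Hf : forall x, x ^ 2 + th * x + th ^ 2 - IZR p = 0 -> x = th).
  { intros x Hx. apply Huniq.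
    replace (x ^ 3 - IZR p * x - IZR q) with
      ((x - th) * (x ^ 2 + th * x + th ^ 2 - IZR p) + (th ^ 3 - IZR p * th - IZR q)) by ring.
    rewrite Hx, Hroot. ring. }
  assert (E1 := Hf ((- th + d) / 2) ltac:(field_simplify; nra)).
  assert (E2 := Hf ((- th - d) / 2) ltac:(field_simplify; nra)).
  assert (Hth : th = 0) by lra.
  apply (NRh 0%Z 1%Z ltac:(lia)). subst th. replace (IZR 0 / IZR 1) with 0 by (simpl; field). exact Hroot.
Qed.

Fixpoint iterS (g : nat -> nat) (i : nat) : nat :=
  match i with O => g O | S i => g (iterS g i) end.

Lemma bernoulli l n : 1 < l -> 1 + INR n * (l - 1) <= l ^ n.
Proof.
  intros Hl. induction n. simpl. lra. rewrite S_INR. simpl.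
  assert (0 <= INR n) by apply pos_INR. assert (0 <= INR n * (l - 1)) by (apply Rmult_le_pos; lra).
  assert (0 <= (l - 1) * (l ^ n - 1)) by (apply Rmult_le_pos; lra). nra.
Qed.

Lemma combo A B g1 g2 rho c R x : A = R * cos x -> B = R * sin x ->
  g1 = rho * cos c -> g2 = rho * sin c -> A * g1 - B * g2 = R * rho * cos (x + c).
Proof. intros -> -> -> ->. rewrite cos_plus. ring. Qed.

Lemma combo_bound A B h1 h2 R : Rabs A <= R -> Rabs B <= R ->
  Rabs (A * h1 - B * h2) <= R * (Rabs h1 + Rabs h2).
Proof.
  intros HA HB. unfold Rminus. eapply Rle_trans. apply Rabs_triang.
  rewrite Rabs_Ropp, !Rabs_mult. pose proof (Rabs_pos h1). pose proof (Rabs_pos h2).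
  pose proof (Rabs_pos A). pose proof (Rabs_pos B). nra.
Qed.

Lemma cos_shift_bound x c phi al be (m : Z) :
  al = phi / PI -> be = 1 / 2 - c / PI ->
  Rabs (cos (x * phi + c)) <= PI * Rabs (x * al - be - IZR m).
Proof.
  intros Hal Hbe. pose proof PI_RGT_0.
  set (t := x * al - be - IZR m).
  assert (E : x * phi + c = PI * t + PI / 2 + IZR m * PI) by (unfold t; rewrite Hal, Hbe; field; lra).
  rewrite E, cos_plus, (sin_eq_0_1 (IZR m * PI)) by eauto.
  rewrite cos_plus, cos_PI2, sin_PI2.
  replace ((cos (PI * t) * 0 - sin (PI * t) * 1) * cos (IZR m * PI) - sin (PI * t + PI / 2) * 0)
    with (- (sin (PI * t) * cos (IZR m * PI))) by ring.
  rewrite Rabs_Ropp, Rabs_mult.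
  pose proof (Rabs_sin_le (PI * t)). rewrite Rabs_mult, (Rabs_right PI) in H0 by lra.
  assert (Rabs (cos (IZR m * PI)) <= 1) by (apply Rabs_le; apply COS_bound).
  pose proof (Rabs_pos (sin (PI * t))). pose proof (Rabs_pos (cos (IZR m * PI))). nra.
Qed.

Lemma Rabs_cos1 x : Rabs (cos x) <= 1.
Proof. apply Rabs_le. apply COS_bound. Qed.
Lemma Rabs_sin1 x : Rabs (sin x) <= 1.
Proof. apply Rabs_le. apply SIN_bound. Qed.

Lemma to_leq a b : (a <= b)%nat -> is_true (ssrnat.leq a b).
Proof. intro H. exact (ssrbool.introT ssrnat.leP H). Qed.

Lemma lt_div a b Y : 0 < Y -> a * Y < b -> a < b / Y.
Proof. intros HY H. unfold Rdiv. apply (Rmult_lt_reg_r Y); auto. rewrite Rmult_assoc, Rinv_l by lra. lra. Qed.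

Lemma ln_le' x y : 0 < x -> x <= y -> ln x <= ln y.
Proof. intros Hx Hxy. destruct (Req_dec x y) as [->|Hne]. lra. apply Rlt_le, ln_increasing; lra. Qed.

Lemma main_real p q th (NRh : NR p q) (Hroot : th ^ 3 - IZR p * th - IZR q = 0)
  (Huniq : forall x : R, x ^ 3 - IZR p * x - IZR q = 0 -> x = th) :
  exists s : nat -> nat, peck_sequence th (th ^ 2) s.
Proof.
  pose proof (disc_pos p q th NRh Hroot Huniq) as HD.
  set (v := sqrt (3 * th ^ 2 / 4 - IZR p)).
  assert (Hv : 0 < v) by (apply sqrt_lt_R0; auto).
  assert (Hv2 : v ^ 2 = 3 * th ^ 2 / 4 - IZR p) by (simpl; rewrite Rmult_1_r; apply sqrt_sqrt; lra).
  assert (Hp : IZR p = 3 * th ^ 2 / 4 - v ^ 2) by lra.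
  assert (Hq : IZR q = th ^ 3 - IZR p * th) by lra.
  clearbody v.
  destruct (unit_exists p q th v NRh Hroot ltac:(lra) Hq Hp) as [eps [Hl Hprod]].
  set (l := ev0 th eps) in *.
  assert (HSe : 0 < er th v eps ^ 2 + ei th v eps ^ 2).
  { fold (SS th v eps). apply (Rmult_lt_reg_l l). lra. rewrite Rmult_0_r. lra. }
  destruct (polar _ _ HSe) as [phi [Hc1 Hs1]].
  set (r := sqrt (er th v eps ^ 2 + ei th v eps ^ 2)) in *.
  assert (Hr2 : r * r = SS th v eps) by (unfold SS; apply sqrt_sqrt; lra).
  assert (Hr0 : 0 < r) by (apply sqrt_lt_R0; auto).
  assert (HS1 : SS th v eps < 1) by (assert (0 < (l - 1) * SS th v eps) by (apply Rmult_lt_0_compat; nra); nra).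
  assert (Hr1 : r < 1) by nra.
  pose proof (polar_pow p q th v Hq Hp eps r phi Hc1 Hs1) as PP.
  assert (Hg : 0 < (- 3 * th / 2) ^ 2 + v ^ 2) by (pose proof (pow2_ge_0 (- 3 * th / 2)); nra).
  destruct (polar _ _ Hg) as [c [Hg1 Hg2]].
  set (rho := sqrt ((- 3 * th / 2) ^ 2 + v ^ 2)) in *.
  assert (Hrho : 0 < rho) by (apply sqrt_lt_R0; auto).
  set (h := Rabs (- 3 * th ^ 2 / 4 - v ^ 2) + Rabs (- th * v)).
  assert (Hh : 0 <= h) by (unfold h; pose proof (Rabs_pos (- 3 * th ^ 2 / 4 - v ^ 2)); pose proof (Rabs_pos (- th * v)); lra).
  set (E := fun n => tpow p q eps n).
  set (sR := fun n => IZR (tr p (E n))).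
  assert (Es : forall n, sR n = l ^ n + 2 * (r ^ n * cos (INR n * phi))).
  { intros n. unfold sR, E. rewrite (tr_eq p th v Hp), (ev0_pow p q th Hq). destruct (PP n) as [-> _]. reflexivity. }
  assert (Ea : forall n, IZR (tr p (tmul p q (E n) (mk 0 1 0))) - th * sR n
                 = 2 * (r ^ n * rho * cos (INR n * phi + c))).
  { intros n. unfold sR, E. rewrite (tr1 p q th v Hq Hp). destruct (PP n) as [A B].
    f_equal. apply combo; auto. }
  assert (Hrn : forall n, 0 < r ^ n <= 1).
  { intros n. split. apply pow_lt; auto. induction n; simpl; nra. }
  assert (Hln : forall n, r ^ n * r ^ n * l ^ n = 1).
  { intros n. rewrite <- !Rpow_mult_distr. replace (r * r * l) with 1 by nra. apply pow1. }
  assert (Hl1 : forall n, 1 <= l ^ n) by (intros n; induction n; simpl; nra).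
  assert (Hsb : forall n, l ^ n - 2 <= sR n <= l ^ n + 2).
  { intros n. rewrite Es. pose proof (COS_bound (INR n * phi)). destruct (Hrn n). split; nra. }
  assert (Eb : forall n, Rabs (IZR (tr p (tmul p q (E n) (mk 0 0 1))) - th ^ 2 * sR n) <= 2 * (r ^ n * h)).
  { intros n. unfold sR, E. rewrite (tr2 p q th v Hq Hp). destruct (PP n) as [A B].
    rewrite Rabs_mult, (Rabs_right 2) by lra. apply Rmult_le_compat_l. lra.
    apply combo_bound.
    - rewrite A, Rabs_mult, (Rabs_right (r ^ n)) by (destruct (Hrn n); lra).
      pose proof (Rabs_cos1 (INR n * phi)). destruct (Hrn n). pose proof (Rabs_pos (cos (INR n * phi))). nra.
    - rewrite B, Rabs_mult, (Rabs_right (r ^ n)) by (destruct (Hrn n); lra).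
      pose proof (Rabs_sin1 (INR n * phi)). destruct (Hrn n). pose proof (Rabs_pos (sin (INR n * phi))). nra. }
  set (N0 := S (Z.to_nat (up ((4 / (l - 1) + 4) / (l - 1))))).
  assert (Hbig : forall n, (N0 <= n)%nat -> 4 / (l - 1) + 4 < l ^ n).
  { intros n Hn. assert (Hpos : 0 < (4 / (l - 1) + 4) / (l - 1)).
    { apply Rdiv_lt_0_compat; [|lra]. assert (0 < 4 / (l - 1)) by (apply Rdiv_lt_0_compat; lra). lra. }
    pose proof (up_pos_nat _ Hpos).
    assert (INR N0 <= INR n) by (apply le_INR; auto).
    assert (INR (Z.to_nat (up ((4 / (l - 1) + 4) / (l - 1)))) < INR N0) by (unfold N0; rewrite S_INR; lra).
    assert (HH : (4 / (l - 1) + 4) / (l - 1) * (l - 1) < INR n * (l - 1)) by (apply Rmult_lt_compat_r; lra).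
    replace ((4 / (l - 1) + 4) / (l - 1) * (l - 1)) with (4 / (l - 1) + 4) in HH by (field; lra).
    pose proof (bernoulli l n Hl). lra. }
  assert (H4l : 0 < 4 / (l - 1)) by (apply Rdiv_lt_0_compat; lra).
  assert (Hstep : forall n, (N0 <= n)%nat -> 4 < l ^ n * (l - 1)).
  { intros n Hn. pose proof (Hbig n Hn).
    assert (4 / (l - 1) * (l - 1) < l ^ n * (l - 1)) by (apply Rmult_lt_compat_r; lra).
    replace (4 / (l - 1) * (l - 1)) with 4 in H0 by (field; lra). lra. }
  assert (Hsq : forall n, (N0 <= n)%nat -> r ^ n * sqrt (sR n) <= 2).
  { intros n Hn. pose proof (Hbig n Hn). pose proof (Hsb n). pose proof (Hln n). destruct (Hrn n).
    assert (Hs0 : 0 <= sR n) by lra.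
    pose proof (sqrt_pos (sR n)). pose proof (sqrt_sqrt (sR n) Hs0).
    assert (r ^ n * r ^ n * sR n <= 3) by nra.
    nra. }
  set (sZ := fun k : nat => tr p (E (k + N0)%nat)).
  assert (HsZ : forall k, 2 < IZR (sZ k)).
  { intros k. change (IZR (sZ k)) with (sR (k + N0)%nat). pose proof (Hbig (k + N0)%nat ltac:(lia)).
    pose proof (Hsb (k + N0)%nat). lra. }
  assert (HsZi : forall k, (2 < sZ k)%Z) by (intros k; apply lt_IZR; apply HsZ).
  assert (HINR : forall k, INR (Z.to_nat (sZ k)) = sR (k + N0)%nat).
  { intros k. rewrite INR_Zto_nat. reflexivity. specialize (HsZi k). lia. }
  set (al := phi / PI). set (be := 1 / 2 - c / PI).
  assert (Hirr := phase_irr p q th v NRh Hroot ltac:(lra) Hq Hp eps r phi Hl Hprod Hc1 Hs1).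
  set (G := fun k => (1 <= k + N0)%nat /\ exists m : Z, Rabs (INR (k + N0)%nat * al - be - IZR m) <= 3 / INR (k + N0)%nat).
  assert (HG : forall K, exists k, (K < k)%nat /\ G k).
  { intros K. destruct (inhom al be Hirr (K + N0)) as [n [Hn [m Hm]]].
    exists (n - N0)%nat. split. lia. split. lia. exists m. replace (n - N0 + N0)%nat with n by lia. auto. }
  set (nx := fun K => epsilon (inhabits 0%nat) (fun k => (K < k)%nat /\ G k)).
  assert (Hnx : forall K, (K < nx K)%nat /\ G (nx K)) by (intros K; apply epsilon_spec; apply HG).
  assert (Hln3 : 0 < ln 3) by (rewrite <- ln_1; apply ln_increasing; lra).
  assert (Hlnl : 0 < ln l) by (rewrite <- ln_1; apply ln_increasing; lra).
  pose proof PI_RGT_0 as HPI.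
  exists (fun k => Z.to_nat (sZ k)). unfold peck_sequence. split; [|split].
  - intros k. apply to_leq. specialize (HsZi k). lia.
  - intros k. apply to_leq. assert (sZ k < sZ (S k))%Z.
    { apply lt_IZR. change (sR (k + N0)%nat < sR (S k + N0)%nat). simpl.
      pose proof (Hsb (k + N0)%nat). pose proof (Hsb (S (k + N0))). pose proof (Hstep (k + N0)%nat ltac:(lia)).
      simpl in H0. replace (l ^ (k + N0) * (l - 1)) with (l * l ^ (k + N0) - l ^ (k + N0)) in H1 by ring. lra. }
    pose proof (HsZi k). lia.
  - exists (2 * (2 * rho + 2 * h) + 1), (12 * PI * rho * (ln 3 + ln l) + 1).
    split. lra. split. assert (0 < PI * rho) by (apply Rmult_lt_0_compat; lra). nra.
    split.
    + intros k. rewrite HINR. set (n := (k + N0)%nat).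
      assert (Hs2 : 2 < sR n) by apply HsZ.
      assert (Hsqp : 0 < sqrt (sR n)) by (apply sqrt_lt_R0; lra).
      apply lt_div; auto.
      assert (D1 : dist_int (sR n * th) <= 2 * (r ^ n * rho)).
      { eapply Rle_trans. apply (dist_int_le _ (tr p (tmul p q (E n) (mk 0 1 0)))).
        rewrite Rabs_minus_sym. replace (IZR (tr p (tmul p q (E n) (mk 0 1 0))) - sR n * th)
          with (IZR (tr p (tmul p q (E n) (mk 0 1 0))) - th * sR n) by ring.
        rewrite Ea, Rabs_mult, (Rabs_right 2) by lra. rewrite Rabs_mult, (Rabs_right (r ^ n * rho)).
        pose proof (Rabs_cos1 (INR n * phi + c)). destruct (Hrn n).
        assert (0 < r ^ n * rho) by (apply Rmult_lt_0_compat; lra). nra.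
        destruct (Hrn n). apply Rle_ge, Rlt_le, Rmult_lt_0_compat; lra. }
      assert (D2 : dist_int (sR n * th ^ 2) <= 2 * (r ^ n * h)).
      { eapply Rle_trans. apply (dist_int_le _ (tr p (tmul p q (E n) (mk 0 0 1)))).
        rewrite Rabs_minus_sym. replace (IZR (tr p (tmul p q (E n) (mk 0 0 1))) - sR n * th ^ 2)
          with (IZR (tr p (tmul p q (E n) (mk 0 0 1))) - th ^ 2 * sR n) by ring.
        apply Eb. }
      pose proof (Hsq n ltac:(unfold n; lia)). destruct (Hrn n).
      apply Rle_lt_trans with (2 * (r ^ n * (rho + h)) * sqrt (sR n)).
      apply Rmult_le_compat_r. lra. apply Rmax_lub; nra.
      nra.
    + exists (iterS nx). split.
      * intros i. apply to_leq. simpl. apply Hnx.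
      * intros i. assert (HGi : G (iterS nx i)) by (destruct i; simpl; apply Hnx).
        destruct HGi as [Hn1 [m Hm]].
        rewrite HINR. set (n := (iterS nx i + N0)%nat) in *.
        assert (Hs2 : 2 < sR n) by apply HsZ.
        split. apply to_leq. specialize (HsZi (iterS nx i)). lia.
        assert (Hsqp : 0 < sqrt (sR n)) by (apply sqrt_lt_R0; lra).
        assert (Hlns : 0 < ln (sR n)) by (rewrite <- ln_1; apply ln_increasing; lra).
        assert (HnR : 1 <= INR n) by (apply (le_INR 1); auto).
        apply lt_div. apply Rmult_lt_0_compat; auto.
        assert (Hcos := cos_shift_bound (INR n) c phi al be m eq_refl eq_refl).
        assert (D1 : dist_int (sR n * th) <= 2 * (r ^ n * rho) * (PI * (3 / INR n))).
        { eapply Rle_trans. apply (dist_int_le _ (tr p (tmul p q (E n) (mk 0 1 0)))).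
          rewrite Rabs_minus_sym. replace (IZR (tr p (tmul p q (E n) (mk 0 1 0))) - sR n * th)
            with (IZR (tr p (tmul p q (E n) (mk 0 1 0))) - th * sR n) by ring.
          rewrite Ea, Rabs_mult, (Rabs_right 2) by lra.
          destruct (Hrn n). assert (0 < r ^ n * rho) by (apply Rmult_lt_0_compat; lra).
          rewrite Rabs_mult, (Rabs_right (r ^ n * rho)) by lra.
          assert (Hc3 : Rabs (cos (INR n * phi + c)) <= PI * (3 / INR n)).
          { eapply Rle_trans. exact Hcos. apply Rmult_le_compat_l; lra. }
          pose proof (Rabs_pos (cos (INR n * phi + c))). nra. }
        assert (Hlnb : ln (sR n) <= INR n * (ln 3 + ln l)).
        { apply Rle_trans with (ln (3 * l ^ n)).
          apply ln_le'. lra. pose proof (Hsb n). pose proof (Hl1 n). lra.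
          rewrite ln_mult, ln_pow by (try apply pow_lt; lra).
          assert (ln 3 <= INR n * ln 3) by nra. lra. }
        pose proof (Hsq n ltac:(unfold n; lia)). destruct (Hrn n).
        apply Rle_lt_trans with (2 * (r ^ n * rho) * (PI * (3 / INR n)) * (sqrt (sR n) * ln (sR n))).
        apply Rmult_le_compat_r. apply Rmult_le_pos; lra. exact D1.
        replace (2 * (r ^ n * rho) * (PI * (3 / INR n)) * (sqrt (sR n) * ln (sR n)))
          with (6 * PI * rho * (r ^ n * sqrt (sR n)) * (ln (sR n) / INR n)) by (field; lra).
        assert (ln (sR n) / INR n <= ln 3 + ln l).
        { apply (Rmult_le_reg_r (INR n)). lra. unfold Rdiv. rewrite Rmult_assoc, Rinv_l by lra. lra. }
        assert (0 <= ln (sR n) / INR n) by (unfold Rdiv; apply Rmult_le_pos; [lra| apply Rlt_le, Rinv_0_lt_compat; lra]).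
        assert (0 < PI * rho) by (apply Rmult_lt_0_compat; lra).
        assert (0 <= r ^ n * sqrt (sR n)) by nra.
        assert (6 * PI * rho * (r ^ n * sqrt (sR n)) <= 12 * PI * rho) by nra.
        assert (6 * PI * rho * (r ^ n * sqrt (sR n)) * (ln (sR n) / INR n) <= 12 * PI * rho * (ln 3 + ln l)).
        { apply Rle_trans with (12 * PI * rho * (ln (sR n) / INR n)). apply Rmult_le_compat_r; lra.
          apply Rmult_le_compat_l; lra. }
        lra.
Qed.


Theorem theorem1 (p q : Z) (theta : R)
  (Hirr : cubic_irreducible_Q p q)
  (Hroot : theta ^ 3 - IZR p * theta - IZR q = 0)
  (Huniq : forall x : R, x ^ 3 - IZR p * x - IZR q = 0 -> x = theta) :
  exists s : nat -> nat, peck_sequence theta (theta ^ 2) s.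
Proof.
  apply (main_real p q theta); auto.
  exact (MCpart.no_rat_root p q Hirr).
Qed.
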